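(* Let $E$ be a locally bounded or locally convex separable F-space with F-norm $\|\cdot\|$, and let $T:E\to E$ be an operator satisfying the Frequent Hypercyclicity Criterion with dense set $E_0$ and map $S:E_0\to E_0$. Let $(a_k)_{k\ge1}$ be a sequence of nonzero scalars and $(x_k)_{k\ge1}$ a dense sequence in $E_0$. Then there exists an increasing sequence $(n_k)_{k\ge1}$ of positive integers such that the series $x=\sum_{k\ge1}a_kS^{n_k}(x_k)$ converges in $E$ and $x$ is a supercyclic vector for $T$.
   Context: An F-space is a complete metrizable topological vector space; operator means continuous linear map. $T$ satisfies the Frequent Hypercyclicity Criterion if there exist a dense subset $E_0\subseteq E$ and a map $S:E_0\to E_0$ such that for every $x\in E_0$: (i) $\sum_{n\ge0}T^n(x)$ is unconditionally convergent, (ii) $\sum_{n\ge0}S^n(x)$ is unconditionally convergent, (iii) $TS(x)=x$. A vector $x$ is supercyclic for $T$ if $\{\lambda T^n(x): n\ge0,\lambda\in\mathbb{K}\}$ is dense in $E$. *)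

(* Defs.v *)
From mathcomp Require Import all_boot all_order all_algebra.
From mathcomp Require Import all_classical all_reals all_analysis.
From mathcomp Require Import complex.
Import numFieldNormedType.Exports.
Import Order.TTheory GRing.Theory Num.Theory.

Set Implicit Arguments.
Unset Strict Implicit.
Unset Printing Implicit Defensive.

Local Open Scope classical_set_scope.
Local Open Scope ring_scope.

Section Defs.
Variables (R : realType) (K : numFieldType) (E : topologicalLmodType K).

Definition is_Fnorm (N : E -> R) : Prop :=
  [/\ (forall x, 0 <= N x),
      (forall x, N x = 0 <-> x = 0),
      (forall (l : K) x, `|l| <= 1 -> N (l *: x) <= N x),
      (forall x y, N (x + y) <= N x + N y) &
      (forall x (e : R), 0 < e ->
         exists2 d : K, 0 < d & forall l : K, `|l| < d -> N (l *: x) < e)].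

Definition Fspace_with_Fnorm (N : E -> R) : Prop :=
  [/\ is_Fnorm N,
      (forall x : E, nbhs x =
         filter_from [set e : R | 0 < e] (fun e => [set y : E | N (y - x) < e])) &
      (forall u : nat -> E,
         (forall e : R, 0 < e -> exists M, forall m n, (M <= m)%N -> (M <= n)%N ->
              N (u m - u n) < e) ->
         exists l : E, u @ \oo --> l)].

Definition separable_space : Prop :=
  exists D : set E, countable D /\ dense D.

Definition tvs_bounded (A : set E) : Prop :=
  forall V : set E, nbhs (0 : E) V ->
    exists2 s : K, 0 < s & forall t : K, s < `|t| -> A `<=` [set t *: v | v in V].

Definition locally_bounded : Prop :=
  exists U : set E, nbhs (0 : E) U /\ tvs_bounded U.

Definition convex_set (U : set E) : Prop :=
  forall x y, U x -> U y -> forall t : K, 0 <= t <= 1 -> U (t *: x + (1 - t) *: y).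

Definition locally_convex : Prop :=
  forall V : set E, nbhs (0 : E) V ->
    exists U : set E, [/\ nbhs (0 : E) U, convex_set U & U `<=` V].

Definition operator (T : E -> E) : Prop :=
  linear T /\ continuous T.

Definition unconditionally_convergent (u : nat -> E) : Prop :=
  forall sigma : nat -> nat, bijective sigma ->
    exists l : E, series (u \o sigma) @ \oo --> l.

(* Frequent Hypercyclicity Criterion with dense set E0 and map S : E0 -> E0
   (S is represented by a function on E mapping E0 into E0; only its values on
   E0 matter). *)
Definition FHC_with (T : E -> E) (E0 : set E) (S : E -> E) : Prop :=
  [/\ dense E0,
      (forall x, E0 x -> E0 (S x)) &
      (forall x, E0 x ->
        [/\ unconditionally_convergent (fun n => iter n T x),
            unconditionally_convergent (fun n => iter n S x) &
            T (S x) = x])].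

Definition supercyclic (T : E -> E) (x : E) : Prop :=
  dense [set y : E | exists (n : nat) (l : K), y = l *: iter n T x].

End Defs.

Definition Theorem4 (R : realType) (K : numFieldType) : Prop :=
  forall (E : topologicalLmodType K) (N : E -> R),
    Fspace_with_Fnorm N ->
    separable_space E ->
    (locally_bounded E \/ locally_convex E) ->
  forall (T : E -> E) (E0 : set E) (S : E -> E),
    operator T ->
    FHC_with T E0 S ->
  forall (a : nat -> K) (xs : nat -> E),
    (forall k, a k != 0) ->
    (forall k, E0 (xs k)) ->
    dense (range xs) ->
  exists n : nat -> nat,
    [/\ (forall k, (0 < n k)%N),
        (forall k, (n k < n k.+1)%N) &
        exists x : E,
          series (fun k => a k *: iter (n k) S (xs k)) @ \oo --> x
          /\ supercyclic T x].

(* Main.v *)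
Require Import Defs.
From mathcomp Require Import all_boot all_order all_algebra.
From mathcomp Require Import all_classical all_reals all_analysis.
From mathcomp Require Import complex.
From mathcomp Require Import zify ring lra.
Import numFieldNormedType.Exports.
Import Order.TTheory GRing.Theory Num.Theory.
Set Implicit Arguments.
Unset Strict Implicit.
Unset Printing Implicit Defensive.
Local Open Scope classical_set_scope.
Local Open Scope ring_scope.
Section Fnorm.
Variables (R : realType) (K : numFieldType) (E : topologicalLmodType K) (N : E -> R).
Hypothesis hN : Fspace_with_Fnorm N.

Let hF : is_Fnorm N. Proof. by case: hN. Qed.

Lemma N_ge0 x : 0 <= N x. Proof. by case: hF. Qed.
Lemma N0 : N 0 = 0. Proof. by case: hF => _ h _ _ _; apply: (h 0).2. Qed.
Lemma N_eq0 x : N x = 0 -> x = 0. Proof. by case: hF => _ h _ _ _; apply: (h x).1. Qed.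
Lemma NN x : N (- x) = N x.
Proof.
case: hF => _ _ h _ _.
have H y : N (- y) <= N y by rewrite -scaleN1r; apply: h; rewrite normrN normr1.
apply/eqP; rewrite eq_le H /=.
by rewrite -{1}(opprK x) H.
Qed.
Lemma ND x y : N (x + y) <= N x + N y. Proof. by case: hF. Qed.
Lemma NB x y z : N (x - z) <= N (x - y) + N (y - z).
Proof. have -> : x - z = (x - y) + (y - z) by rewrite addrA subrK. exact: ND. Qed.
Lemma NC x y : N (x - y) = N (y - x). Proof. by rewrite -opprB NN. Qed.
Lemma N_sum (I : Type) (r : seq I) (P : pred I) (F : I -> E) :
  N (\sum_(i <- r | P i) F i) <= \sum_(i <- r | P i) N (F i).
Proof.
apply: (big_ind2 (fun a b => N a <= b)).
- by rewrite N0.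
- move=> x1 x2 y1 y2 h1 h2; apply: le_trans (ND _ _) _; exact: lerD.
- by move=> i _.
Qed.

Lemma cvgN (u : nat -> E) l : u @ \oo --> l <->
  forall e, 0 < e -> exists M, forall n, (M <= n)%N -> N (u n - l) < e.
Proof.
case: hN => _ hnb _.
split.
- move=> H e e0.
  have : nbhs l [set y : E | N (y - l) < e] by rewrite hnb; exists e.
  move/H => [M _ HM]; exists M => n Mn; exact: HM.
- move=> H A; rewrite hnb => -[e e0 HA].
  have [M HM] := H e e0.
  exists M => // n Mn; apply: HA; exact: HM.
Qed.

Lemma scal_cont (c : K) : continuous (fun v : E => c *: v).
Proof.
move=> x; exact: (cvg_comp2 (cvg_cst _) cvg_id (@scale_continuous K E (_, _))).
Qed.

Definition ev (P : nat -> Prop) := exists M, forall n, (M <= n)%N -> P n.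

Lemma cvg0Z (v : nat -> E) (c : K) : (forall e, 0 < e -> ev (fun n => N (v n) < e)) ->
  forall e, 0 < e -> ev (fun n => N (c *: v n) < e).
Proof.
move=> H.
have hv : v @ \oo --> 0.
  by apply/cvgN => e e0; have [M HM] := H e e0; exists M => n /HM; rewrite subr0.
have hcv : (fun n => c *: v n) @ \oo --> c *: 0 := (cvg_comp _ _ hv (@scal_cont c 0)).
rewrite scaler0 in hcv.
move/cvgN: hcv => H2 e e0; have [M HM] := H2 e e0; exists M => n /HM; by rewrite subr0.
Qed.

Lemma uc_term0 (u : nat -> E) : unconditionally_convergent u ->
  forall e, 0 < e -> ev (fun n => N (u n) < e).
Proof.
move=> hu.
have [l hl] := hu id (@Bijective _ _ id id (fun _ => erefl) (fun _ => erefl)).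
move/cvgN: hl => hl e e0.
have [M HM] := hl (e / 2) (divr_gt0 e0 (ltr0Sn _ 1)).
exists M => n Mn.
have -> : u n = series (u \o id) n.+1 - series (u \o id) n by rewrite seriesSB.
apply: le_lt_trans (NB _ l _) _.
rewrite (NC l) (splitr e); apply: ltrD; [apply: HM; exact: leqW | exact: HM].
Qed.

End Fnorm.
Section Oper.
Variables (K : numFieldType) (E : topologicalLmodType K) (T : E -> E).
Hypothesis hlin : linear T.
Hypothesis hcont : continuous T.

Lemma TD u v : T (u + v) = T u + T v.
Proof. by have := hlin 1 u v; rewrite !scale1r. Qed.
Lemma T0 : T 0 = 0.
Proof. by have := TD 0 0; rewrite addr0 => /(congr1 (fun w => w - T 0)); rewrite subrr addrK. Qed.
Lemma TZ c u : T (c *: u) = c *: T u.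
Proof. by have := hlin c u 0; rewrite !addr0 T0 addr0. Qed.

Lemma iT_cont n : continuous (iter n T).
Proof.
elim: n => [|n IH] x; first exact: cvg_id.
have H := cvg_comp _ _ (IH x) (@hcont (iter n T x)). exact: H.
Qed.
Lemma iT_add n u v : iter n T (u + v) = iter n T u + iter n T v.
Proof. by elim: n => //= n ->; rewrite TD. Qed.
Lemma iT0 n : iter n T 0 = 0.
Proof. by elim: n => //= n ->; rewrite T0. Qed.
Lemma iTZ n c u : iter n T (c *: u) = c *: iter n T u.
Proof. by elim: n => //= n ->; rewrite TZ. Qed.
Lemma iT_sum n (I : Type) (r : seq I) (P : pred I) (F : I -> E) :
  iter n T (\sum_(i <- r | P i) F i) = \sum_(i <- r | P i) iter n T (F i).
Proof. apply: big_morph; [exact: iT_add | exact: iT0]. Qed.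

Variables (E0 : set E) (S : E -> E).
Hypothesis hS : forall x, E0 x -> E0 (S x).
Hypothesis hTS : forall x, E0 x -> T (S x) = x.

Lemma iS_E0 n z : E0 z -> E0 (iter n S z).
Proof. by move=> hz; elim: n => //= n IH; apply: hS. Qed.

Lemma L1 z m n : E0 z -> (m <= n)%N -> iter m T (iter n S z) = iter (n - m) S z.
Proof.
move=> hz; elim: m => [|m IH] mn; first by rewrite subn0.
rewrite iterS IH; last exact: ltnW.
by rewrite -(subnSK mn) iterS hTS //; apply: iS_E0.
Qed.

Lemma L2 z m n : E0 z -> (n <= m)%N -> iter m T (iter n S z) = iter (m - n) T z.
Proof.
move=> hz nm; rewrite -{1}(subnK nm) iterD L1 // subnn //.
Qed.
End Oper.
Section Eps.
Variable R : realType.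
Definition eps (j : nat) : R := 1 / 2 ^+ j.

Lemma eps_gt0 j : 0 < eps j.
Proof. by rewrite /eps divr_gt0 // exprn_gt0. Qed.

Lemma eps_S j : 2 * eps j.+1 = eps j.
Proof.
by rewrite /eps exprS !mul1r invfM mulrA divff ?mul1r.
Qed.

Lemma sum_eps m n : (m <= n)%N -> \sum_(m <= j < n) eps j <= 2 * eps m.
Proof.
move=> mn.
rewrite (eq_big_nat _ _ (F2 := fun k => (- (2 * eps k.+1)) - (- (2 * eps k)))); last first.
  by move=> i _; rewrite opprK eps_S; lra.
rewrite (telescope_sumr (fun k => - (2 * eps k)) mn) opprK.
have := eps_gt0 n; lra.
Qed.

Lemma eps_small e : 0 < e -> ev (fun n => eps n < e).
Proof.
move=> e0; have := near_infty_natSinv_expn_lt (PosNum e0).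
by move=> [M _ HM]; exists M => n /HM.
Qed.
End Eps.

Lemma ev_and (P1 P2 : nat -> Prop) : ev P1 -> ev P2 -> ev (fun n => P1 n /\ P2 n).
Proof.
move=> [M1 H1] [M2 H2]; exists (maxn M1 M2) => n; rewrite geq_max => /andP[h1 h2].
by split; [apply: H1 | apply: H2].
Qed.

Lemma ev_fin j (Q : nat -> nat -> Prop) : (forall i, (i < j)%N -> ev (Q i)) ->
  ev (fun n => forall i, (i < j)%N -> Q i n).
Proof.
elim: j => [|j IH] H; first by exists 0%N.
have [M1 H1] := IH (fun i ij => H i (ltnW ij)).
have [M2 H2] := H j (ltnSn j).
exists (maxn M1 M2) => n; rewrite geq_max => /andP[h1 h2] i.
rewrite ltnS leq_eqVlt => /orP[/eqP -> | ij]; first exact: H2.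
exact: H1.
Qed.

Lemma ev_shift p (P : nat -> Prop) : ev P -> ev (fun n => P (n - p)%N).
Proof. move=> [M H]; exists (M + p)%N => n hn; apply: H; lia. Qed.
Section Main.
Variables (R : realType) (K : numFieldType) (E : topologicalLmodType K) (N : E -> R).
Hypothesis hN : Fspace_with_Fnorm N.
Variables (T : E -> E) (E0 : set E) (S : E -> E).
Hypothesis hlin : linear T.
Hypothesis hcont : continuous T.
Hypothesis hS : forall x, E0 x -> E0 (S x).
Hypothesis hTuc : forall x, E0 x -> unconditionally_convergent (fun n => iter n T x).
Hypothesis hSuc : forall x, E0 x -> unconditionally_convergent (fun n => iter n S x).
Hypothesis hTS : forall x, E0 x -> T (S x) = x.
Variables (a : nat -> K) (xs : nat -> E).
Hypothesis ha : forall k, a k != 0.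
Hypothesis hxs : forall k, E0 (xs k).
Hypothesis hdense : dense (range xs).

Definition good j (p : nat -> nat) (n : nat) : Prop :=
  [/\ (forall i, (i < j)%N -> (p i < n)%N), (0 < n)%N,
      N (a j *: iter n S (xs j)) < eps R j,
      (forall i, (i < j)%N -> N ((a j / a i) *: iter (n - p i) S (xs j)) < eps R j) &
      (forall i, (i < j)%N -> N ((a i / a j) *: iter (n - p i) T (xs i)) < eps R j / j.+1%:R)].

Let Tto0 z c : E0 z -> forall e, 0 < e -> ev (fun n => N (c *: iter n T z) < e).
Proof. by move=> hz; apply: cvg0Z => //; apply: uc_term0 => //; apply: hTuc. Qed.
Let Sto0 z c : E0 z -> forall e, 0 < e -> ev (fun n => N (c *: iter n S z) < e).
Proof. by move=> hz; apply: cvg0Z => //; apply: uc_term0 => //; apply: hSuc. Qed.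

Lemma good_ex j p : exists n, good j p n.
Proof.
have ej := eps_gt0 R j.
have e2 : 0 < eps R j / j.+1%:R by rewrite divr_gt0.
have c1 : ev (fun n => forall i, (i < j)%N -> (p i < n)%N).
  by apply: ev_fin => i _; exists (p i).+1.
have c2 : ev (fun n => (0 < n)%N) by exists 1%N.
have c3 := Sto0 (a j) (hxs j) ej.
have c4 : ev (fun n => forall i, (i < j)%N -> N ((a j / a i) *: iter (n - p i) S (xs j)) < eps R j).
  apply: ev_fin => i _; apply: (@ev_shift (p i) (fun m => N ((a j / a i) *: iter m S (xs j)) < eps R j)).
  exact: Sto0.
have c5 : ev (fun n => forall i, (i < j)%N -> N ((a i / a j) *: iter (n - p i) T (xs i)) < eps R j / j.+1%:R).
  apply: ev_fin => i _; apply: (@ev_shift (p i) (fun m => N ((a i / a j) *: iter m T (xs i)) < eps R j / j.+1%:R)).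
  exact: Tto0.
have [M HM] := ev_and c1 (ev_and c2 (ev_and c3 (ev_and c4 c5))).
have [h1 [h2 [h3 [h4 h5]]]] := HM M (leqnn M).
by exists M; split.
Qed.

Definition gch j p := proj1_sig (cid (good_ex j p)).
Lemma gchP j p : good j p (gch j p).
Proof. exact: (proj2_sig (cid (good_ex j p))). Qed.

Fixpoint pre (j : nat) : nat -> nat :=
  match j with
  | 0 => fun _ => gch 0 (fun _ => 0%N)
  | j'.+1 => fun i => if (i <= j')%N then pre j' i else gch j'.+1 (pre j')
  end.
Definition nn (i : nat) := pre i i.

Lemma pre_stable j i : (i <= j)%N -> pre j i = nn i.
Proof.
elim: j => [|j IH]; first by rewrite leqn0 => /eqP ->.
rewrite leq_eqVlt => /orP[/eqP -> // | ].
rewrite ltnS => ij /=; rewrite ij; exact: IH.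
Qed.

Lemma good_ext j p p' n : (forall i, (i < j)%N -> p i = p' i) -> good j p n -> good j p' n.
Proof.
move=> hp [h1 h2 h3 h4 h5]; split => // i ij; rewrite -hp //; [exact: h1 | exact: h4 | exact: h5].
Qed.

Lemma nn_good j : good j nn (nn j).
Proof.
case: j => [|j].
  by apply: (good_ext (p := fun _ => 0%N)) => //; exact: gchP.
rewrite /nn /= ltnn.
apply: (good_ext (p := pre j)); last exact: gchP.
by move=> i; rewrite ltnS; apply: pre_stable.
Qed.

Lemma nn_inc i j : (i < j)%N -> (nn i < nn j)%N.
Proof. by case: (nn_good j) => h1 _ _ _ _; apply: h1. Qed.

Definition uu j := a j *: iter (nn j) S (xs j).

Lemma series_cauchy e : 0 < e -> exists M, forall m n, (M <= m)%N -> (M <= n)%N ->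
  N (series uu m - series uu n) < e.
Proof.
move=> e0.
have [M HM] := eps_small (divr_gt0 e0 (ltr0Sn _ 1)) : ev (fun n => eps R n < e / 2).
have key m n : (M <= n)%N -> (n <= m)%N -> N (series uu m - series uu n) < e.
  move=> Mn nm.
  rewrite /series /= (big_cat_nat (leq0n n) nm) /=.
  have -> : forall A B : E, A + B - A = B by move=> A B; rewrite addrAC subrr add0r.
  apply: le_lt_trans (N_sum hN _ _ _) _.
  apply: (@le_lt_trans _ _ (\sum_(n <= j < m) eps R j)).
    apply: ler_sum => j _; apply: ltW; by case: (nn_good j).
  apply: le_lt_trans (sum_eps _ nm) _.
  have := HM n Mn; lra.
exists M => m n Mm Mn.
case: (leqP n m) => nm; first exact: key.
rewrite (NC hN); apply: key => //; exact: ltnW.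
Qed.


Lemma split_id k m : (k < m)%N ->
  (a k)^-1 *: iter (nn k) T (series uu m) =
  \sum_(0 <= j < k) (a j / a k) *: iter (nn k - nn j) T (xs j) + xs k
  + \sum_(k.+1 <= j < m) (a j / a k) *: iter (nn j - nn k) S (xs j).
Proof.
move=> km.
rewrite /series /= (iT_sum hlin) scaler_sumr (big_cat_nat (leq0n k) (ltnW km)) /=.
rewrite (big_ltn km) addrA.
congr (_ + _ + _).
- apply: eq_big_nat => j /andP[_ jk].
  rewrite /uu (iTZ hlin) scalerA mulrC (L2 hS hTS) //; exact: ltnW (nn_inc jk).
- by rewrite /uu (iTZ hlin) scalerA mulVf // scale1r (L1 hS hTS) // subnn.
- apply: eq_big_nat => j /andP[kj _].
  rewrite /uu (iTZ hlin) scalerA mulrC (L1 hS hTS) //; exact: ltnW (nn_inc kj).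
Qed.

Lemma approx k m : (k < m)%N ->
  N ((a k)^-1 *: iter (nn k) T (series uu m) - xs k) <= 2 * eps R k.
Proof.
move=> km; rewrite split_id //.
set A := \sum_(0 <= j < k) _; set B := \sum_(k.+1 <= j < m) _.
have -> : A + xs k + B - xs k = A + B by rewrite addrAC addrK.
apply: le_trans (ND hN _ _) _.
have hA : N A <= eps R k.
  apply: le_trans (N_sum hN _ _ _) _.
  apply: (@le_trans _ _ (\sum_(0 <= j < k) (eps R k / k.+1%:R))).
    apply: ler_sum_nat => j /andP[_ jk]; apply: ltW.
    by case: (nn_good k) => _ _ _ _; apply.
  rewrite sumr_const_nat subn0 -[_ *+ k]mulr_natr mulrAC ler_pdivrMr ?ltr0Sn //.
  have e0 := eps_gt0 R k.
  apply: ler_wpM2l; [exact: ltW | rewrite ler_nat; exact: leqnSn].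
have hB : N B <= eps R k.
  apply: le_trans (N_sum hN _ _ _) _.
  apply: (@le_trans _ _ (\sum_(k.+1 <= j < m) eps R j)).
    apply: ler_sum_nat => j /andP[kj _]; apply: ltW.
    by case: (nn_good j) => _ _ _ h _; apply: h.
  by rewrite -eps_S; apply: sum_eps.
lra.
Qed.

Lemma series_cvg : exists x : E, series uu @ \oo --> x.
Proof. by case: hN => _ _ hc; apply: hc => e e0; apply: series_cauchy. Qed.

Lemma approx_lim (x : E) k : series uu @ \oo --> x ->
  N ((a k)^-1 *: iter (nn k) T x - xs k) < 3 * eps R k.
Proof.
move=> hx.
pose f := fun v : E => (a k)^-1 *: iter (nn k) T v.
have hf : (f \o series uu) @ \oo --> f x.
  apply: (cvg_comp _ _ hx).
  exact: (cvg_comp _ _ (@iT_cont _ _ _ hcont (nn k) x) (@scal_cont _ _ _ _)).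
have e0 := eps_gt0 R k.
move/(cvgN hN): hf => /(_ _ e0) [M HM].
have hm := HM (maxn M k.+1) (leq_maxl _ _).
have ha2 := approx (leq_maxr M k.+1).
apply: le_lt_trans (NB hN _ (f (series uu (maxn M k.+1))) _) _.
rewrite (NC hN); rewrite /f /= in hm ha2 *; lra.
Qed.

Lemma ball_sub (w : E) : w != 0 -> forall z (r : R) p, 0 < r ->
  exists z' (r' : R), 0 < r' /\ forall y, N (y - z') < r' -> N (y - z) < r /\ y != p.
Proof.
move=> w0 z r p r0.
case: (eqVneq p z) => [-> | pz].
- have hF : is_Fnorm N by case: hN.
  case: hF => _ _ _ _ h5.
  have r20 : 0 < r / 2 by rewrite divr_gt0.
  have [d d0 hd] := h5 w (r / 2) r20.
  set t := d / 2.
  have t0 : 0 < t by rewrite divr_gt0.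
  have htw : N (t *: w) < r / 2.
    apply: hd; rewrite gtr0_norm // /t ltr_pdivrMr ?ltr0Sn //.
    by rewrite -{1}(mulr1 d) ltr_pM2l // ltr1n.
  have tw0 : N (t *: w) != 0.
    apply/eqP => /(N_eq0 hN) /eqP; rewrite scaler_eq0 (negPf w0) orbF.
    by apply/negP; rewrite gt_eqF.
  have twp : 0 < N (t *: w) by rewrite lt_neqAle eq_sym tw0 (N_ge0 hN).
  exists (z + t *: w), (Num.min (r / 2) (N (t *: w))); split.
    by rewrite lt_min r20.
  move=> y; rewrite lt_min => /andP[h1 h2]; split.
    apply: le_lt_trans (NB hN _ (z + t *: w) _) _.
    rewrite addrAC subrr add0r; lra.
  apply/eqP => yz; move: h2; rewrite yz (NC hN) addrAC subrr add0r ltxx //.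
- exists z, (Num.min r (N (p - z))); split.
    rewrite lt_min r0 /= lt_neqAle (N_ge0 hN) andbT eq_sym.
    by apply/eqP => /(N_eq0 hN) /eqP; rewrite subr_eq0 (negPf pz).
  move=> y; rewrite lt_min => /andP[h1 h2]; split => //.
  by apply/eqP => yp; move: h2; rewrite yp ltxx.
Qed.

Lemma inf_often (w : E) : w != 0 -> forall k0 z (r : R), 0 < r ->
  exists k, (k0 <= k)%N /\ N (xs k - z) < r.
Proof.
move=> w0; elim => [|k0 IH] z r r0.
- have hnb : nbhs z [set y | N (y - z) < r].
    by case: hN => _ hnb _; rewrite hnb; exists r.
  have [y [Oy [k _ kxs]]] := hdense (ex_intro _ z hnb) (open_interior _).
  exists k; split => //; rewrite kxs; exact: (interior_subset Oy).
- have [z' [r' [r'0 hb]]] := ball_sub w0 z (xs k0) r0.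
  have [k [kk hk]] := IH z' r' r'0.
  have [h1 h2] := hb _ hk.
  exists k; split => //.
  rewrite leq_eqVlt in kk; case/orP: kk => [/eqP kk | //].
  by rewrite kk eqxx in h2.
Qed.

End Main.
Lemma thm4 (R : realType) (K : numFieldType) : Theorem4 R K.
Proof.
move=> E N hN _ _ T E0 S [hlin hcont] [hd hS hE] a xs ha hxs hdense.
have hTuc : forall x, E0 x -> unconditionally_convergent (fun n => iter n T x).
  by move=> x /hE [].
have hSuc : forall x, E0 x -> unconditionally_convergent (fun n => iter n S x).
  by move=> x /hE [].
have hTS : forall x, E0 x -> T (S x) = x by move=> x /hE [].
exists (nn hN hTuc hSuc a hxs); split.
- by move=> k; case: (nn_good hN hTuc hSuc a hxs k).
- by move=> k; apply: nn_inc.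
have [x hx] := series_cvg hN hTuc hSuc a hxs.
exists x; split; first exact: hx.
case: (pselect (exists w : E, w != 0)) => [[w w0] | hw0].
- move=> O [z Oz] oO.
  have hO : nbhs z O by rewrite openE in oO; exact: oO.
  case: (hN) => _ hnb _.
  move: hO; rewrite hnb => -[r r0 hr].
  have r20 : 0 < r / 2 by rewrite divr_gt0.
  have r6 : 0 < r / 6 by rewrite divr_gt0.
  have [k0 hk0] := eps_small r6.
  have [k [kk hk]] := inf_often hN hdense w0 k0 z r20.
  have hap := approx_lim hlin hcont hS hTS ha k hx.
  have hek := hk0 k kk.
  exists ((a k)^-1 *: iter (nn hN hTuc hSuc a hxs k) T x); split;
    last by exists (nn hN hTuc hSuc a hxs k), (a k)^-1.
  apply: hr => /=; apply: le_lt_trans (NB hN _ (xs k) _) _.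
  lra.
- move=> O [z Oz] _; exists z; split => //; exists 0%N, 0; rewrite scale0r.
  by case: (eqVneq z 0) => // hz; exfalso; apply: hw0; exists z.
Qed.

Theorem mainTheorem4 (R : realType) : Theorem4 R R /\ Theorem4 R R[i].
Proof. split; exact: thm4. Qed.
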